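(* Let $F|R$ be an extension of ordered fields with canonical valuation $v$, and let $D<E$ be non-empty subsets of $R$. Assume that either $(D,E)$ is a non-ball cut in $R$ with $\mathrm{Betw}_F(D,E)\neq\emptyset$, or $(D,E)$ is a ball complement in $R$. Then $\mathrm{Betw}_F(D,E)=B_S(a,F)$ for each $a\in\mathrm{Betw}_F(D,E)$, where $S$ is the largest final segment of $vF$ disjoint from $v(E-D)$ (equivalently, the largest subset $S$ of $vF$ with $S>v(E-D)$).
   Context: The canonical valuation $v$ of an ordered field has as valuation ring the convex hull of $\mathbb Z$. $\mathrm{Betw}_F(D,E)=\{c\in F\mid D<c<E\}$ and $v(E-D)=\{v(e-d)\mid e\in E,d\in D\}$. For an ordered field $K$, $a\in K$ and a final segment $S$ of $vK$ (possibly empty), $B_S(a,K)=\{b\in K\mid v(a-b)\in S\cup\{\infty\}\}$ is a ball. A ball complement of a ball $B$ of $R$ is a pair $(D,E)$ with $D<B<E$ and $D\cup B\cup E=R$. A cut of $R$ is a pair $(D,E)$ with $D<E$ and $D\cup E=R$; for nonempty $A\subseteq R$, $A^+=(D,R\setminus D)$ with $D$ the smallest initial segment containing $A$, and $A^-=(R\setminus E,E)$ with $E$ the smallest final segment containing $A$; a cut is a ball cut if it is $B^+$ or $B^-$ for some ball $B$, and a non-ball cut otherwise. *)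

(* Defs.v *)
From HB Require Import structures.
From mathcomp Require Import all_boot all_order all_algebra.
From mathcomp Require Import boolp classical_sets.
Set Implicit Arguments. Unset Strict Implicit. Unset Printing Implicit Defensive.
Import Order.TTheory GRing.Theory Num.Theory.
Local Open Scope ring_scope.
Local Open Scope classical_set_scope.

(* Ordered fields are modelled as [realFieldType]s.  An extension F|R of
   ordered fields is modelled as a subfield R (a subset) of F, with the
   induced order. *)
Definition subfield (F : realFieldType) (R : set F) : Prop :=
  [/\ R 0, R 1,
      (forall x y, R x -> R y -> R (x - y)),
      (forall x y, R x -> R y -> R (x * y)) &
      (forall x, R x -> R x^-1)].

(* Valuation ring of the canonical valuation: the convex hull of Z. *)
Definition vring (F : realFieldType) : set F :=
  [set z | exists m n : int, (m%:~R <= z) && (z <= n%:~R)].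

(* vle x y  <->  v x <= v y  (with v 0 = infinity), i.e. y lies in x * O. *)
Definition vle (F : realFieldType) (x y : F) : Prop :=
  exists2 z, vring z & y = z * x.

(* Subsets of the value group vK of a subfield K are represented by the
   set of nonzero elements of K whose value lies in the subset.
   final_seg K S : S represents a final segment of vK. *)
Definition final_seg (F : realFieldType) (K S : set F) : Prop :=
  (forall x, S x -> K x /\ x != 0) /\
  (forall x y, S x -> K y -> y != 0 -> vle x y -> S y).

(* B_S(a,K) = {b in K | v(a - b) in S u {infinity}} *)
Definition vball (F : realFieldType) (K S : set F) (a : F) : set F :=
  [set b | K b /\ (b = a \/ S (a - b))].

Definition is_ball (F : realFieldType) (K B : set F) : Prop :=
  exists a S, [/\ K a, final_seg K S & B = vball K S a].

Definition setlt (F : realFieldType) (A B : set F) : Prop :=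
  forall x y, A x -> B y -> x < y.

Definition Betw (F : realFieldType) (K D E : set F) : set F :=
  [set c | K c /\ (forall d, D d -> d < c) /\ (forall e, E e -> c < e)].

Definition ball_complement (F : realFieldType) (K D E : set F) : Prop :=
  exists B, [/\ is_ball K B, setlt D B, setlt B E & D `|` B `|` E = K].

Definition is_cut (F : realFieldType) (K D E : set F) : Prop :=
  D `<=` K /\ E `<=` K /\ setlt D E /\ D `|` E = K.

Definition init_hull (F : realFieldType) (K A : set F) : set F :=
  [set y | K y /\ exists2 x, A x & y <= x].
Definition final_hull (F : realFieldType) (K A : set F) : set F :=
  [set y | K y /\ exists2 x, A x & x <= y].

Definition cut_plus (F : realFieldType) (K A : set F) : set F * set F :=
  (init_hull K A, K `\` init_hull K A).
Definition cut_minus (F : realFieldType) (K A : set F) : set F * set F :=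
  (K `\` final_hull K A, final_hull K A).

Definition ball_cut (F : realFieldType) (K D E : set F) : Prop :=
  exists B, is_ball K B /\ ((D, E) = cut_plus K B \/ (D, E) = cut_minus K B).

Definition disj_vdiff (F : realFieldType) (S D E : set F) : Prop :=
  forall d e, D d -> E e -> ~ S (e - d).

(* Main.v *)
Require Import Defs.
From mathcomp Require Import all_boot all_order all_algebra.
From mathcomp Require Import boolp classical_sets.
From mathcomp Require Import ring lra.
Import Order.TTheory GRing.Theory Num.Theory.
Local Open Scope ring_scope.
Local Open Scope classical_set_scope.

Lemma vleP (F : realFieldType) (x y : F) :
  vle x y <-> exists n : nat, `|y| <= n%:R * `|x|.
Proof.
split.
- case=> z [m [k /andP[hm hk]]] ->.
  exists (`|m| + `|k|)%N; rewrite normrM ler_wpM2r //.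
  have h1 : (`|m|%N)%:R = `|m%:~R : F| by rewrite natr_absz intr_norm.
  have h2 : (`|k|%N)%:R = `|k%:~R : F| by rewrite natr_absz intr_norm.
  rewrite natrD h1 h2.
  have := ler_norm (m%:~R : F); have := ler_norm (k%:~R : F).
  have := ler_normr (m%:~R : F) (`|m%:~R : F|).
  have := normr_ge0 (m%:~R : F); have := normr_ge0 (k%:~R : F).
  have := ler_norm (- (m%:~R : F)); rewrite normrN.
  case: (lerP 0 z) => hz; [rewrite ger0_norm // | rewrite ltr0_norm //]; lra.
- case=> n hn.
  have [x0|x0] := eqVneq x 0.
    move: hn; rewrite x0 normr0 mulr0 normr_le0 => /eqP ->.
    exists 0; last by rewrite mulr0.
    by exists 0%Z, 0%Z; rewrite lexx.
  exists (y / x); last by rewrite divfK.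
  exists (- n%:Z)%Z, n%:Z.
  have hx : 0 < `|x| by rewrite normr_gt0.
  have : `|y / x| <= n%:R by rewrite normrM normfV ler_pdivrMr.
  rewrite intrN !pmulrn => /ler_normlP [h1 h2].
  apply/andP; split; lra.
Qed.

Lemma vle_trans (F : realFieldType) (x y w : F) : vle x y -> vle y w -> vle x w.
Proof.
move=> /vleP[n hn] /vleP[m hm]; apply/vleP; exists (m * n)%N.
rewrite natrM -mulrA; apply: (le_trans hm); apply: ler_wpM2l => //.
Qed.

Lemma ST (F : realFieldType) (D E S : set F) :
  setlt D E -> final_seg setT S -> disj_vdiff S D E ->
  (forall S' : set F, final_seg setT S' -> disj_vdiff S' D E -> S' `<=` S) ->
  forall x, S x <-> (x != 0 /\ forall d e (n : nat), D d -> E e -> n%:R * `|x| < e - d).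
Proof.
move=> hDE [hS1 hS2] hdisj hmax x; split.
- move=> Sx; split; first by case: (hS1 x Sx).
  move=> d e n Dd Ee; rewrite ltNge; apply/negP => hle.
  have hde := hDE d e Dd Ee.
  apply: (hdisj d e Dd Ee); apply: (hS2 x) => //.
    by rewrite subr_eq0 gt_eqF.
  apply/vleP; exists n; rewrite ger0_norm //; lra.
- move=> hT; apply: (hmax (fun x => x != 0 /\ forall d e (n : nat), D d -> E e -> n%:R * `|x| < e - d)) => //.
  + split; first by move=> y [].
    move=> y z [y0 hy] _ z0 /vleP[m hm]; split => // d e n Dd Ee.
    have := hy d e (n * m)%N Dd Ee; rewrite natrM -mulrA => h.
    apply: le_lt_trans h; apply: ler_wpM2l => //.
  + move=> d e Dd Ee [_ h]; have := h d e 1%N Dd Ee.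
    have hde := hDE d e Dd Ee; rewrite mul1r ger0_norm; lra.
Qed.

Lemma main_abc (F : realFieldType) (D E S : set F) a :
  setlt D E -> final_seg setT S -> disj_vdiff S D E ->
  (forall S' : set F, final_seg setT S' -> disj_vdiff S' D E -> S' `<=` S) ->
  Betw setT D E a ->
  (forall d e (n : nat), D d -> E e -> exists d' e', [/\ D d', E e' & n%:R * (e' - d') <= e - d]) ->
  (forall d, D d -> exists d' e' (n : nat), [/\ D d', E e' & e' - d' <= n%:R * (a - d)]) ->
  (forall e, E e -> exists d' e' (n : nat), [/\ D d', E e' & e' - d' <= n%:R * (e - a)]) ->
  Betw setT D E = vball setT S a.
Proof.
move=> hDE hfs hdisj hmax [_ [haD haE]] hA hB hC.
have hST := @ST _ D E S hDE hfs hdisj hmax.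
apply/seteqP; split => b.
- move=> [_ [hbD hbE]]; split => //.
  have [->|ba] := eqVneq b a; first by left.
  right; apply/hST; split; first by rewrite subr_eq0 eq_sym.
  move=> d e [|n] Dd Ee.
    have := hDE d e Dd Ee; rewrite mul0r; lra.
  have [d' [e' [Dd' Ee' hle]]] := hA d e n.+1 Dd Ee.
  apply: lt_le_trans hle; rewrite ltr_pM2l ?ltr0Sn //.
  have := haD d' Dd'; have := haE e' Ee'; have := hbD d' Dd'; have := hbE e' Ee'.
  rewrite ltr_norml; move=> *; apply/andP; split; lra.
- move=> [_ [->|hS]]; first by split.
  have [ab0 hT] := (hST _).1 hS.
  split => //; split.
  + move=> d Dd; rewrite ltNge; apply/negP => hbd.
    have [d' [e' [n [Dd' Ee' hle]]]] := hB d Dd.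
    have := hT d' e' n Dd' Ee'; rewrite ltNge => /negP; apply.
    apply: (le_trans hle); apply: ler_wpM2l => //.
    have := haD d Dd => had; rewrite ger0_norm; lra.
  + move=> e Ee; rewrite ltNge; apply/negP => heb.
    have [d' [e' [n [Dd' Ee' hle]]]] := hC e Ee.
    have := hT d' e' n Dd' Ee'; rewrite ltNge => /negP; apply.
    apply: (le_trans hle); apply: ler_wpM2l => //.
    have := haE e Ee => hae; rewrite ler0_norm; lra.
Qed.

Lemma R_opp (F : realFieldType) (R : set F) x : subfield R -> R x -> R (- x).
Proof. case=> h0 _ hB _ _ hx; rewrite -sub0r; exact: hB. Qed.
Lemma R_sub (F : realFieldType) (R : set F) x y : subfield R -> R x -> R y -> R (x - y).
Proof. by case=> _ _ hB _ _; apply: hB. Qed.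
Lemma R_add (F : realFieldType) (R : set F) x y : subfield R -> R x -> R y -> R (x + y).
Proof. move=> hR hx hy; rewrite -[y]opprK; apply: R_sub => //; exact: R_opp. Qed.
Lemma R_mul (F : realFieldType) (R : set F) x y : subfield R -> R x -> R y -> R (x * y).
Proof. by case=> _ _ _ hM _; apply: hM. Qed.
Lemma R_nat (F : realFieldType) (R : set F) (n : nat) : subfield R -> R n%:R.
Proof.
move=> hR; elim: n => [|n IH]; first by case: hR.
rewrite -addn1 natrD; apply: R_add => //; by case: hR.
Qed.
Lemma R_div (F : realFieldType) (R : set F) x y : subfield R -> R x -> R y -> R (x / y).
Proof. move=> hR hx hy; apply: R_mul => //; by case: hR => _ _ _ _; apply. Qed.

Lemma step_lemma (F : realFieldType) (D E : set F) (f : nat -> F) n :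
  setlt D E -> (forall k, D (f k) \/ E (f k)) -> D (f 0%N) -> E (f n) ->
  exists k, D (f k) /\ E (f k.+1).
Proof.
move=> hDE hf; elim: n => [|n IH] h0 hn.
  by have := hDE _ _ h0 hn; rewrite ltxx.
case: (hf n) => h; first by exists n.
exact: IH.
Qed.

Lemma cut_A (F : realFieldType) (R D E : set F) : subfield R -> is_cut R D E ->
  forall d e (n : nat), D d -> E e -> exists d' e', [/\ D d', E e' & n%:R * (e' - d') <= e - d].
Proof.
move=> hR [hDR [hER [hDE hU]]] d e [|n] Dd Ee.
  exists d, e; split => //; have := hDE d e Dd Ee; rewrite mul0r; lra.
set h := (e - d) / n.+1%:R.
have hn : n.+1%:R != 0 :> F by rewrite pnatr_eq0.
pose f k := d + k%:R * h.
have hf : forall k, D (f k) \/ E (f k).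
  move=> k; have : (D `|` E) (f k).
    rewrite hU; apply: R_add => //; first exact: hDR.
    apply: R_mul => //; first exact: R_nat.
    apply: R_div => //; last exact: R_nat.
    apply: R_sub => //; [exact: (hER e Ee) | exact: (hDR d Dd)].
  by [].
have [k [h1 h2]] : exists k, D (f k) /\ E (f k.+1).
  apply: (@step_lemma _ D E f n.+1 hDE hf).
  by rewrite /f mul0r addr0.
  by rewrite /f /h mulrC divfK // addrC subrK.

exists (f k), (f k.+1); split => //.
rewrite /f /h -addn1 natrD le_eqVlt; apply/orP; left; apply/eqP.
field.
by rewrite -natr1 in hn.
Qed.

Lemma cut_B (F : realFieldType) (R D E : set F) a d : subfield R -> is_cut R D E ->
  ~ ball_cut R D E -> Betw setT D E a -> D d ->
  exists d' e' (n : nat), [/\ D d', E e' & e' - d' <= n%:R * (a - d)].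
Proof.
move=> hR [hDR [hER [hDE hU]]] hnb [_ [haD haE]] Dd.
apply: contrapT => hne.
have hH : forall d' e' (n : nat), D d' -> E e' -> n%:R * (a - d) < e' - d'.
  move=> d' e' n Dd' Ee'; rewrite ltNge; apply/negP => hle; apply: hne.
  by exists d', e', n.
have had := haD d Dd.
pose S' := fun s => R s /\ s != 0 /\ vle (a - d) s.
pose B := vball R S' d.
have DorE : forall y, R y -> D y \/ E y by move=> y; rewrite -hU.
have hBD : B `<=` D.
  move=> x [Rx [->|[_ [_ /vleP[n hn]]]]] //.
  case: (DorE x Rx) => // Ex.
  have h1 := hH d x n Dd Ex; have h2 := hDE d x Dd Ex.
  rewrite distrC ger0_norm in hn; last lra.
  rewrite ger0_norm in hn; last lra.
  by have := lt_le_trans h1 hn; rewrite ltxx.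
have hD : D = init_hull R B.
  apply/seteqP; split => y.
  - move=> Dy; split; first exact: hDR.
    case: (lerP y d) => hyd.
      exists d => //; split; [exact: hDR | by left].
    exists y => //; split; first exact: hDR.
    right; split; first by apply: R_sub => //; exact: hDR.
    split; first by rewrite subr_eq0 lt_eqF.
    apply/vleP; exists 1%N; rewrite mul1r distrC !ger0_norm; [|lra|lra].
    have := haD y Dy; lra.
  - move=> [Ry [x Bx hyx]].
    case: (DorE y Ry) => // Ey.
    by have := lt_le_trans (hDE x y (hBD x Bx) Ey) hyx; rewrite ltxx.
apply: hnb; exists B; split.
  exists d, S'; split => //; first exact: hDR.
  split; first by move=> x [? [? _]].
  move=> x y [_ [_ hx]] Ry y0 hxy; split => //; split => //.
  exact: vle_trans hx hxy.
left; rewrite /cut_plus -hD; congr pair.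
apply/seteqP; split => y.
- move=> Ey; split; first exact: hER.
  move=> Dy; have := hDE y y Dy Ey; by rewrite ltxx.
- by move=> [Ry nDy]; case: (DorE y Ry).
Qed.

Lemma cut_C (F : realFieldType) (R D E : set F) a e : subfield R -> is_cut R D E ->
  ~ ball_cut R D E -> Betw setT D E a -> E e ->
  exists d' e' (n : nat), [/\ D d', E e' & e' - d' <= n%:R * (e - a)].
Proof.
move=> hR [hDR [hER [hDE hU]]] hnb [_ [haD haE]] Ee.
apply: contrapT => hne.
have hH : forall d' e' (n : nat), D d' -> E e' -> n%:R * (e - a) < e' - d'.
  move=> d' e' n Dd' Ee'; rewrite ltNge; apply/negP => hle; apply: hne.
  by exists d', e', n.
have hae := haE e Ee.
pose S' := fun s => R s /\ s != 0 /\ vle (e - a) s.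
pose B := vball R S' e.
have DorE : forall y, R y -> D y \/ E y by move=> y; rewrite -hU.
have hBE : B `<=` E.
  move=> x [Rx [->|[_ [_ /vleP[n hn]]]]] //.
  case: (DorE x Rx) => // Dx.
  have h1 := hH x e n Dx Ee; have h2 := hDE x e Dx Ee.
  rewrite ger0_norm in hn; last lra.
  rewrite ger0_norm in hn; last lra.
  by have := lt_le_trans h1 hn; rewrite ltxx.
have hE : E = final_hull R B.
  apply/seteqP; split => y.
  - move=> Ey; split; first exact: hER.
    case: (lerP e y) => hey.
      exists e => //; split; [exact: hER | by left].
    exists y => //; split; first exact: hER.
    right; split; first by apply: R_sub => //; exact: hER.
    split; first by rewrite subr_eq0 gt_eqF.
    apply/vleP; exists 1%N; rewrite mul1r !ger0_norm; [|lra|lra].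
    have := haE y Ey; lra.
  - move=> [Ry [x Bx hyx]].
    case: (DorE y Ry) => // Dy.
    by have := lt_le_trans (hDE y x Dy (hBE x Bx)) hyx; rewrite ltxx.
apply: hnb; exists B; split.
  exists e, S'; split => //; first exact: hER.
  split; first by move=> x [? [? _]].
  move=> x y [_ [_ hx]] Ry y0 hxy; split => //; split => //.
  exact: vle_trans hx hxy.
right; rewrite /cut_minus -hE; congr pair.
apply/seteqP; split => y.
- move=> Dy; split; first exact: hDR.
  move=> Ey; have := hDE y y Dy Ey; by rewrite ltxx.
- by move=> [Ry nEy]; case: (DorE y Ry).
Qed.

Lemma ballc_ABC (F : realFieldType) (R D E : set F) a : subfield R ->
  D `<=` R -> E `<=` R -> setlt D E -> ball_complement R D E -> Betw setT D E a ->
  [/\ (forall d e (n : nat), D d -> E e -> exists d' e', [/\ D d', E e' & n%:R * (e' - d') <= e - d]),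
      (forall d, D d -> exists d' e' (n : nat), [/\ D d', E e' & e' - d' <= n%:R * (a - d)]) &
      (forall e, E e -> exists d' e' (n : nat), [/\ D d', E e' & e' - d' <= n%:R * (e - a)])].
Proof.
move=> hR hDR hER hDE [B [[c [S0 [Rc [hS1 hS2] ->]]] hDB hBE hU]] [_ [haD haE]].
have Bc : vball R S0 c c by split => //; left.
have hK : forall x, R x -> 0 < x -> ~ S0 x -> D (c - x) /\ E (c + x).
  move=> x Rx x0 nS; split.
  - have : (D `|` vball R S0 c `|` E) (c - x) by rewrite hU; apply: R_sub.
    case=> [[//|[_ [h|h]]]|h].
    + have : x = 0 by lra.
      by move=> x00; move: x0; rewrite x00 ltxx.
    + by exfalso; move: h; rewrite opprB addrC subrK.
    + have := hBE c (c - x) Bc h => h'.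
      have : (0 : F) < 0 by lra.
      by rewrite ltxx.
  - have : (D `|` vball R S0 c `|` E) (c + x) by rewrite hU; apply: R_add.
    case=> [[h|[_ [h|h]]]|//].
    + have := hDB (c + x) c h Bc => h'.
      have : (0 : F) < 0 by lra.
      by rewrite ltxx.
    + have : x = 0 by lra.
      by move=> x00; move: x0; rewrite x00 ltxx.
    + move: h; rewrite opprD addrA subrr sub0r => h; exfalso; apply: nS.
      apply: (hS2 (- x) x h Rx (lt0r_neq0 x0)).
      by apply/vleP; exists 1%N; rewrite mul1r normrN.
have hnS : forall x (k : nat), R x -> x != 0 -> ~ S0 x -> (0 < k)%N -> ~ S0 (x / k%:R).
  move=> x k Rx x0 nS k0 hS; apply: nS.
  apply: (hS2 _ x hS Rx x0); apply/vleP; exists k.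
  have kp : 0 < k%:R :> F by rewrite ltr0n.
  by rewrite normrM normfV (gtr0_norm kp) mulrCA divff ?mulr1 ?gt_eqF.
have hDf : forall d, D d -> 0 < c - d /\ ~ S0 (c - d).
  move=> d Dd; have := hDB d c Dd Bc => hdc; split; first lra.
  move=> hS; have : vball R S0 c d by split; [exact: hDR | right].
  by move=> Bd; have := hDB d d Dd Bd; rewrite ltxx.
have hEf : forall e, E e -> 0 < e - c /\ ~ S0 (e - c).
  move=> e Ee; have := hBE c e Bc Ee => hce; split; first lra.
  move=> hS; have : vball R S0 c e.
    split; first exact: hER.
    right; apply: (hS2 (e - c)) => //.
    - by apply: R_sub => //; exact: hER.
    - by rewrite subr_eq0 lt_eqF.
    - by apply/vleP; exists 1%N; rewrite mul1r distrC.
  by move=> Be; have := hBE e e Be Ee; rewrite ltxx.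
split.
- move=> d e [|n] Dd Ee.
    exists d, e; split => //; have := hDE d e Dd Ee; rewrite mul0r; lra.
  have [hx0 hxS] := hEf e Ee.
  have [hd0 _] := hDf d Dd.
  have Rx : R (e - c) by apply: R_sub => //; exact: hER.
  have hh := hnS (e - c) (2 * n.+1)%N Rx (lt0r_neq0 hx0) hxS isT.
  have Rh : R ((e - c) / (2 * n.+1)%N%:R) by apply: R_div => //; exact: R_nat.
  have hp : 0 < (e - c) / (2 * n.+1)%N%:R by rewrite divr_gt0 // ltr0n.
  have [Dl _] := hK _ Rh hp hh.
  have [_ Er] := hK _ Rh hp hh.
  exists (c - (e - c) / (2 * n.+1)%N%:R), (c + (e - c) / (2 * n.+1)%N%:R); split => //.
  have -> : n.+1%:R * (c + (e - c) / (2 * n.+1)%N%:R - (c - (e - c) / (2 * n.+1)%N%:R)) = e - c.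
    rewrite natrM; field.
    by rewrite addrC natr1 pnatr_eq0.
  lra.
- move=> d Dd.
  have [hx0 hxS] := hDf d Dd.
  have Rx : R (c - d) by apply: R_sub => //; exact: hDR.
  have hh := hnS (c - d) 2%N Rx (lt0r_neq0 hx0) hxS isT.
  have Rh : R ((c - d) / 2%:R) by apply: R_div => //; exact: R_nat.
  have hp : 0 < (c - d) / 2%:R by rewrite divr_gt0 // ltr0n.
  have [Dl _] := hK _ Rh hp hh.
  have [_ Er] := hK _ Rx hx0 hxS.
  exists d, (c + (c - d)), 4%N; split => //.
  have := haD _ Dl; lra.
- move=> e Ee.
  have [hx0 hxS] := hEf e Ee.
  have Rx : R (e - c) by apply: R_sub => //; exact: hER.
  have hh := hnS (e - c) 2%N Rx (lt0r_neq0 hx0) hxS isT.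
  have Rh : R ((e - c) / 2%:R) by apply: R_div => //; exact: R_nat.
  have hp : 0 < (e - c) / 2%:R by rewrite divr_gt0 // ltr0n.
  have [_ Er] := hK _ Rh hp hh.
  have [Dl _] := hK _ Rx hx0 hxS.
  exists (c - (e - c)), e, 4%N; split => //.
  have := haE _ Er; lra.
Qed.

Theorem lemma4p1 (F : realFieldType) (R D E : set F) :
  subfield R ->
  D `<=` R -> E `<=` R -> D !=set0 -> E !=set0 -> setlt D E ->
  ((is_cut R D E /\ ~ ball_cut R D E /\ Betw setT D E !=set0)
    \/ ball_complement R D E) ->
  forall S : set F,
    final_seg setT S -> disj_vdiff S D E ->
    (forall S' : set F, final_seg setT S' -> disj_vdiff S' D E -> S' `<=` S) ->
  forall a, Betw setT D E a -> Betw setT D E = vball setT S a.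
Proof.
move=> hR hDR hER _ _ hDE hcase S hfs hdisj hmax a ha.
case: hcase => [[hcut [hnb _]] | hbc].
- apply: main_abc => //.
  + exact: cut_A hR hcut.
  + by move=> d Dd; exact: (@cut_B _ R D E a d hR hcut hnb ha Dd).
  + by move=> e Ee; exact: (@cut_C _ R D E a e hR hcut hnb ha Ee).
- have [hA hB hC] := @ballc_ABC _ R D E a hR hDR hER hDE hbc ha.
  exact: main_abc.
Qed.
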